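(* A class of Stone topological $\Omega$-algebras is a Stone variety if and only if it is a residually closed Stone pseudovariety.
   Context: $\Omega=\biguplus_n\Omega_n$ is a fixed topological signature; a Stone topological $\Omega$-algebra is a compact Hausdorff 0-dimensional space $A$ with continuous evaluation maps $\Omega_n\times A^n\to A$. A Stone pseudovariety is a nonempty class of Stone topological algebras closed under images by onto continuous homomorphisms that are Stone topological algebras, closed subalgebras, and finite direct products. A Stone variety is a nonempty class closed under such images, closed subalgebras, and arbitrary direct products. A class $\mathcal C$ is residually closed if every Stone topological algebra that is residually $\mathcal C$ (any two distinct elements separated by a continuous homomorphism into a member of $\mathcal C$) belongs to $\mathcal C$. *)

(* Defs.v *)
From HB Require Import structures.
From mathcomp Require Import all_boot all_order all_algebra.
From mathcomp Require Import all_classical all_reals all_analysis.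

Set Implicit Arguments.
Unset Strict Implicit.
Unset Printing Implicit Defensive.

Local Open Scope classical_set_scope.

(* A topological signature Omega = disjoint union of the Omega n, n : nat;
   each Omega n is a topological space (the operation symbols of arity n). *)
Definition signature := nat -> topologicalType.

(* A topological Omega-algebra structure on a topological space: an
   interpretation map for each arity.  Continuity of the evaluation maps
   Omega_n x A^n -> A is required in [is_stone] below. *)
Record TopAlg (Omega : signature) := {
  carrier :> topologicalType ;
  eval : forall n : nat, Omega n -> ('I_n -> carrier) -> carrier }.

Arguments eval {Omega} _ [n].

Definition eval_map (Omega : signature) (A : TopAlg Omega) (n : nat) :
  Omega n * {ptws 'I_n -> carrier A} -> carrier A :=
  fun p => eval A p.1 p.2.

Definition is_stone (Omega : signature) (A : TopAlg Omega) : Prop :=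
  [/\ compact [set: carrier A], hausdorff_space (carrier A),
      zero_dimensional (carrier A) &
      forall n : nat, continuous (@eval_map Omega A n)].

Definition is_hom (Omega : signature) (A B : TopAlg Omega) (f : A -> B) : Prop :=
  forall (n : nat) (w : Omega n) (a : 'I_n -> A), f (eval A w a) = eval B w (f \o a).

Definition is_chom (Omega : signature) (A B : TopAlg Omega) (f : A -> B) : Prop :=
  is_hom f /\ continuous f.

Definition subalg_closed (Omega : signature) (A : TopAlg Omega) (S : set A) : Prop :=
  forall (n : nat) (w : Omega n) (a : 'I_n -> A),
    (forall i, S (a i)) -> S (eval A w a).

(* The subalgebra on S, with the subspace topology (initial topology of the
   inclusion, as provided by MathComp-Analysis on [set_type S]). *)
Definition subalg (Omega : signature) (A : TopAlg Omega) (S : set A)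
  (hS : subalg_closed S) : TopAlg Omega.
Proof.
refine {| carrier := set_type S ; eval := fun n w a => exist _ (eval A w (fun i => sval (a i))) _ |}.
apply/mem_set; apply: hS => i; exact/set_mem/(svalP (a i)).
Defined.

Definition prod_alg (Omega : signature) (I : Type) (A : I -> TopAlg Omega) :
  TopAlg Omega :=
  {| carrier := prod_topology (fun i => carrier (A i)) ;
     eval := fun n w a => fun i => eval (A i) w (fun k => a k i) |}.

Definition alg_class (Omega : signature) := TopAlg Omega -> Prop.

Definition class_of_stone (Omega : signature) (C : alg_class Omega) : Prop :=
  forall A, C A -> is_stone A.

Definition nonempty_class (Omega : signature) (C : alg_class Omega) : Prop :=
  exists A, C A.

Definition closed_images (Omega : signature) (C : alg_class Omega) : Prop :=
  forall (A B : TopAlg Omega) (f : A -> B),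
    C A -> is_stone B -> is_chom f -> (forall y : B, exists x : A, f x = y) -> C B.

Definition closed_subalgebras (Omega : signature) (C : alg_class Omega) : Prop :=
  forall (A : TopAlg Omega) (S : set A) (hS : subalg_closed S),
    C A -> closed S -> C (subalg hS).

(* closed under finite direct products (finite index types, including the
   empty product) *)
Definition closed_finite_products (Omega : signature) (C : alg_class Omega) : Prop :=
  forall (I : finType) (A : I -> TopAlg Omega),
    (forall i, C (A i)) -> C (prod_alg A).

Definition closed_products (Omega : signature) (C : alg_class Omega) : Prop :=
  forall (I : Type) (A : I -> TopAlg Omega),
    (forall i, C (A i)) -> C (prod_alg A).

Definition stone_pseudovariety (Omega : signature) (C : alg_class Omega) : Prop :=
  [/\ nonempty_class C, closed_images C, closed_subalgebras C &
      closed_finite_products C].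

Definition stone_variety (Omega : signature) (C : alg_class Omega) : Prop :=
  [/\ nonempty_class C, closed_images C, closed_subalgebras C &
      closed_products C].

Definition residually (Omega : signature) (C : alg_class Omega) (A : TopAlg Omega) : Prop :=
  forall x y : A, x <> y ->
    exists (B : TopAlg Omega) (f : A -> B), [/\ C B, is_chom f & f x <> f y].

Definition residually_closed (Omega : signature) (C : alg_class Omega) : Prop :=
  forall A : TopAlg Omega, is_stone A -> residually C A -> C A.

(* Main.v *)
Require Import Defs.
From mathcomp Require Import all_boot all_order all_algebra.
From mathcomp Require Import all_classical all_reals all_analysis.
Local Open Scope classical_set_scope.

Lemma prod_cont (X : topologicalType) (I : Type) (T : I -> topologicalType)
  (g : X -> prod_topology T) : (forall i, continuous (fun x => g x i)) -> continuous g.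
Proof.
move=> cg x; apply/cvg_sup => i.
move: x; apply/(@continuousP _ (initial_topology (fun f : prod_topology T => f i))) => A [B oB <-].
by move/continuousP: (cg i); apply.
Qed.

Lemma pair_cont (X Y Z: topologicalType) (f : X -> Y) (g : X -> Z) :
  continuous f -> continuous g -> continuous (fun x => (f x, g x)).
Proof. by move=> cf cg x; apply: cvg_pair; [exact: cf | exact: cg]. Qed.

Lemma proj_cont (I : Type) (T : I -> topologicalType) (i : I) :
  continuous (fun f : prod_topology T => f i).
Proof. exact: (@proj_continuous {classic I} T i). Qed.

Lemma prod_stone (Omega : signature) (I : Type) (A : I -> TopAlg Omega) :
  (forall i, is_stone (A i)) -> is_stone (prod_alg A).
Proof.
move=> sA; split.
- have := @tychonoff {classic I} (fun i => carrier (A i)) (fun _ => setT) _.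
  have -> : [set f : forall i : {classic I}, carrier (A i) | forall i : {classic I}, setT (f i)] = setT.
    by rewrite predeqE.
  apply => i; by case: (sA i).
- apply: (@hausdorff_product {classic I}) => i; by case: (sA i).
- apply: (@zero_dimension_prod {classic I}) => i; by case: (sA i).
- move=> n; apply: prod_cont => i /=.
  have -> : (fun x : Omega n * {ptws 'I_n -> prod_alg A} => @eval_map Omega (prod_alg A) n x i)
     = (@eval_map Omega (A i) n) \o (fun p : Omega n * {ptws 'I_n -> prod_alg A} => (p.1, (fun k => p.2 k i) : {ptws 'I_n -> A i})).
    by [].
  move=> x; apply: continuous_comp; last by case: (sA i) => _ _ _; apply.
  apply: pair_cont; first by move=> p; exact: cvg_fst.
  apply: prod_cont => k.
  move=> p /=.
  apply: (@continuous_comp _ _ _ (fun p : Omega n * {ptws 'I_n -> prod_alg A} => p.2) (fun f => f k i)); first exact: cvg_snd.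
  apply: (@continuous_comp _ _ _ (fun f : {ptws 'I_n -> prod_alg A} => f k) (fun f : prod_alg A => f i)).
    exact: proj_cont.
  exact: proj_cont.
Qed.

Section Dir1.
Variables (Omega : signature) (C : alg_class Omega).
Hypotheses (sC : class_of_stone C) (ci : closed_images C)
  (cs : closed_subalgebras C) (cp : closed_products C).

Lemma resid_closed : residually_closed C.
Proof.
move=> A sA rA.
pose I := {p : A * A | p.1 <> p.2}.
have ch : forall p : I, {B : TopAlg Omega & {f : A -> B |
    [/\ C B, is_chom f & f (sval p).1 <> f (sval p).2]}}.
  move=> [[x y] /= nxy]; have /cid [B /cid [f Hf]] := rA x y nxy.
  by exists B; exists f.
pose B p := projT1 (ch p).
pose f p : A -> B p := sval (projT2 (ch p)).
have Hf p : [/\ C (B p), is_chom (f p) & f p (sval p).1 <> f p (sval p).2].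
  exact: (svalP (projT2 (ch p))).
pose P := prod_alg B.
pose F : A -> P := fun a p => f p a.
have Fhom : is_hom F.
  move=> n w a; apply: functional_extensionality_dep => p /=.
  by case: (Hf p) => _ [hp _] _; rewrite /F hp.
have Fcont : continuous F.
  by apply: prod_cont => p; case: (Hf p) => _ [_ cp'] _.
have Finj : forall x y, F x = F y -> x = y.
  move=> x y Fxy; apply: contrapT => nxy.
  pose p : I := exist _ (x, y) nxy.
  case: (Hf p) => _ _; apply; rewrite /=.
  by have := congr1 (fun h => h p) Fxy.
pose S : set P := range F.
have hS : Defs.subalg_closed S.
  move=> n w a Sa.
  have /choice [b Hb] : forall i, exists x, F x = a i.
    by move=> i; case: (Sa i) => x _ <-; exists x.
  exists (Defs.eval A w b) => //; rewrite Fhom; congr (Defs.eval P w _).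
  by apply: boolp.funext => i /=.
have stP : is_stone P by apply: prod_stone => p; apply: sC; case: (Hf p).
have hP : hausdorff_space P by case: stP.
have cK : forall K : set A, closed K -> closed (F @` K).
  move=> K clK; apply: compact_closed => //.
  apply: continuous_compact.
    by apply: continuous_subspaceT.
  case: sA => cA _ _ _; exact: (subclosed_compact clK cA).
have clS : closed S by apply: cK; exact: closedT.
have CS : C (subalg hS) by apply: cs => //; apply: cp => p; case: (Hf p).
have gex : forall s : subalg hS, {a : A | F a = sval s}.
  move=> s; have := set_mem (svalP s); case/cid2 => a _ Fa; by exists a.
pose g (s : subalg hS) : A := sval (gex s).
have gE s : F (g s) = sval s by exact: svalP (gex s).
apply: (ci _ _ g CS sA); first split.
- move=> n w s; apply: Finj; rewrite gE Fhom /=.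
  congr (Defs.eval P w _); apply: boolp.funext => i /=.
  by rewrite gE.
- apply/continuous_closedP => K clK.
  have -> : g @^-1` K = (fun s : subalg hS => sval s) @^-1` (F @` K).
    rewrite predeqE => s; split => /=.
      by move=> Kg; exists (g s).
    by case=> k Kk Fk; rewrite -gE in Fk; rewrite -(Finj _ _ Fk).
  move: (cK K clK); apply: (proj1 (continuous_closedP _)).
  exact: (@initial_continuous (set_type S) P set_val).
- move=> y.
  have Sy : (F y) \in S by apply: mem_set; exists y.
  exists (exist _ (F y) Sy); apply: Finj; by rewrite gE.
Qed.
End Dir1.

Theorem proposition5p14 (Omega : signature) (C : alg_class Omega) :
  class_of_stone C ->
  (stone_variety C <-> stone_pseudovariety C /\ residually_closed C).
Proof.
move=> sC; split.
  case=> ne ci cs cp; split; first by split => // I A HA; apply: cp.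
  exact: resid_closed.
case=> [[ne ci cs _] rc]; split => // I A HA.
apply: rc; first by apply: prod_stone => i; apply: sC.
move=> x y nxy.
have [i nxyi] : exists i, x i <> y i.
  apply: contrapT => H; apply: nxy; apply: functional_extensionality_dep => i.
  by apply: contrapT => H'; apply: H; exists i.
exists (A i); exists (fun f : prod_alg A => f i); split => //.
split; first by [].
exact: proj_cont.
Qed.
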